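(* Let $r, n, q$ be positive integers and $t_1,\dots,t_q$ positive integers. Suppose that for each $i\in[q]$ there exists a collection of $n$ matchings, each of size $t_i$, in an $r$-partite $r$-uniform hypergraph $H_i$ that does not admit a rainbow matching of size $t_i$. Then there exists a collection of $n$ matchings, each of size $\sum_{i=1}^q t_i$, in an $r$-partite $r$-uniform hypergraph $H$ that does not admit a rainbow matching of size $\sum_{i=1}^q t_i-q+1$.
   Context: A hypergraph is $r$-uniform if every edge contains exactly $r$ vertices. An $r$-uniform hypergraph is $r$-partite if its vertex set can be partitioned into $r$ sets $V_1,\dots,V_r$ such that every edge contains exactly one vertex from each $V_i$. A matching is a set of pairwise vertex-disjoint edges. Given a collection (repetitions allowed) of matchings $M_1,\dots,M_n$ in a hypergraph, a matching $M\subseteq \bigcup_{i=1}^n M_i$ is rainbow if there is an injection $\phi:M\to[n]$ such that every edge $e\in M$ belongs to $M_{\phi(e)}$. *)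

(* Defs.v *)
From mathcomp Require Import all_boot.
Set Implicit Arguments. Unset Strict Implicit. Unset Printing Implicit Defensive.

Definition rpartite_runiform (r : nat) (V : finType) (E : {set {set V}}) : Prop :=
  (forall e, e \in E -> #|e| = r) /\
  exists part : V -> 'I_r,
    forall e, e \in E -> forall i : 'I_r, #|[set v in e | part v == i]| = 1.

Definition pairwise_disjoint (V : finType) (M : {set {set V}}) : Prop :=
  forall e f, e \in M -> f \in M -> e != f -> [disjoint e & f].

Definition is_matching (V : finType) (E M : {set {set V}}) : Prop :=
  M \subset E /\ pairwise_disjoint M.

(* R is a rainbow matching for the collection (repetitions allowed)
   Ms 0, ..., Ms (n-1) of matchings. *)
Definition rainbow (V : finType) (n : nat) (Ms : 'I_n -> {set {set V}})
    (R : {set {set V}}) : Prop :=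
  R \subset \bigcup_(j < n) Ms j /\ pairwise_disjoint R /\
  exists phi : {set V} -> 'I_n,
    {in R &, injective phi} /\ (forall e, e \in R -> e \in Ms (phi e)).

Definition has_rainbow_matching_of_size (V : finType) (n : nat)
    (Ms : 'I_n -> {set {set V}}) (s : nat) : Prop :=
  exists R : {set {set V}}, #|R| = s /\ rainbow Ms R.

Definition bad_collection (r n t s : nat) : Prop :=
  exists (V : finType) (E : {set {set V}}) (Ms : 'I_n -> {set {set V}}),
    rpartite_runiform r E /\
    (forall j, is_matching E (Ms j) /\ #|Ms j| = t) /\
    ~ has_rainbow_matching_of_size Ms s.

(* Main.v *)
Require Import Defs.
From mathcomp Require Import all_boot zify.
Set Implicit Arguments. Unset Strict Implicit. Unset Printing Implicit Defensive.

Lemma exists_sub (T : finType) (A : {set T}) k :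
  k <= #|A| -> exists B : {set T}, B \subset A /\ #|B| = k.
Proof.
elim: k => [|k IH] hk; first by exists set0; rewrite sub0set cards0.
have [B [sBA cB]] := IH (ltnW hk).
have : ~~ (A \subset B).
  apply/negP => sAB; have := subset_leq_card sAB; lia.
case/subsetPn => x xA xB.
exists (x |: B); split; first by rewrite subUset sub1set xA.
by rewrite cardsU1 xB cB.
Qed.

Lemma disj_intro (T : finType) (A B : {set T}) :
  (forall x, x \in A -> x \in B -> False) -> [disjoint A & B].
Proof.
move=> h; rewrite disjoint_subset; apply/subsetP => x xA.
by rewrite inE; apply/negP => xB; apply: (h x).
Qed.

Lemma rainbow_sub (V : finType) n (Ms : 'I_n -> {set {set V}}) (R R' : {set {set V}}) :
  rainbow Ms R -> R' \subset R -> rainbow Ms R'.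
Proof.
move=> [sR [dR [phi [iphi mphi]]]] sR'.
split; first exact: subset_trans sR' sR.
split; first by move=> e f eR fR; apply: dR; apply: (subsetP sR').
exists phi; split.
  by move=> a b aR bR; apply: iphi; apply: (subsetP sR').
by move=> e eR; apply: mphi; apply: (subsetP sR').
Qed.

Lemma no_larger (V : finType) n (Ms : 'I_n -> {set {set V}}) s R :
  ~ has_rainbow_matching_of_size Ms s -> rainbow Ms R -> #|R| < s.
Proof.
move=> nH rR; rewrite ltnNge; apply/negP => hs.
have [B [sB cB]] := exists_sub hs.
by apply: nH; exists B; split => //; apply: rainbow_sub sB.
Qed.

Lemma pullback (V1 V : finType) (f : V1 -> V) (finj : injective f) n
  (Ms : 'I_n -> {set {set V}}) (Ms1 : 'I_n -> {set {set V1}}) (R : {set {set V}}) :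
  (forall j (e : {set V1}), f @: e \in Ms j -> e \in Ms1 j) -> rainbow Ms R ->
  rainbow Ms1 [set e : {set V1} | f @: e \in R].
Proof.
move=> H [sR [dR [phi [iphi mphi]]]].
split.
  apply/subsetP => e; rewrite inE => eR.
  have /bigcupP [j _ ej] := subsetP sR _ eR.
  by apply/bigcupP; exists j => //; apply: H.
split.
  move=> a b; rewrite !inE => aR bR ab.
  have nab : f @: a != f @: b by apply: contra ab => /eqP /(imset_inj finj) ->.
  have d := dR _ _ aR bR nab.
  apply: disj_intro => x xa xb.
  by have := disjointFr d (imset_f f xa); rewrite (imset_f f xb).
exists (fun e : {set V1} => phi (f @: e)); split.
  move=> a b; rewrite !inE => aR bR /iphi h.
  by apply: (imset_inj finj); apply: h.
by move=> e; rewrite inE => eR; apply: H; apply: mphi.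
Qed.
Lemma inl_inr_neq (V1 V2 : finType) (a : {set V1}) (b : {set V2}) :
  0 < #|a| -> (@inl V1 V2) @: a != (@inr V1 V2) @: b.
Proof.
move=> /card_gt0P [x xa]; apply/eqP => h.
have : inl x \in (@inr V1 V2) @: b by rewrite -h imset_f.
by case/imsetP.
Qed.

Lemma inr_inl_neq (V1 V2 : finType) (a : {set V1}) (b : {set V2}) :
  0 < #|b| -> (@inl V1 V2) @: a != (@inr V1 V2) @: b.
Proof.
move=> /card_gt0P [x xb]; apply/eqP => h.
have : inr x \in (@inl V1 V2) @: a by rewrite h imset_f.
by case/imsetP.
Qed.

Lemma combine r n t1 s1 t2 s2 : 0 < r -> 0 < s1 -> 0 < s2 ->
  bad_collection r n t1 s1 -> bad_collection r n t2 s2 ->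
  bad_collection r n (t1 + t2) (s1 + s2 - 1).
Proof.
move=> r0 s10 s20 [V1 [E1 [M1 [[u1 [p1 hp1]] [hM1 nR1]]]]]
  [V2 [E2 [M2 [[u2 [p2 hp2]] [hM2 nR2]]]]].
pose g1 := fun e : {set V1} => (@inl V1 V2) @: e.
pose g2 := fun e : {set V2} => (@inr V1 V2) @: e.
have g1i : injective g1 by apply: imset_inj => x y [].
have g2i : injective g2 by apply: imset_inj => x y [].
have K1 : forall a b, a \in E1 -> g1 a != g2 b.
  by move=> a b aE; apply: inl_inr_neq; rewrite u1.
have K2 : forall a b, b \in E2 -> g1 a != g2 b.
  by move=> a b bE; apply: inr_inl_neq; rewrite u2.
have sM1 : forall j e, e \in M1 j -> e \in E1.
  by move=> j e; apply: subsetP; case: (hM1 j) => [[]].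
have sM2 : forall j e, e \in M2 j -> e \in E2.
  by move=> j e; apply: subsetP; case: (hM2 j) => [[]].
exists (V1 + V2)%type, (g1 @: E1 :|: g2 @: E2),
  (fun j => g1 @: M1 j :|: g2 @: M2 j).
split.
  split.
    move=> e; case/setUP => /imsetP [x xE ->]; rewrite card_imset //.
    - by apply: u1.
    - by move=> ? ? [].
    - by apply: u2.
    - by move=> ? ? [].
  exists (fun v => match v with inl a => p1 a | inr b => p2 b end).
  move=> e; case/setUP => /imsetP [x xE ->] i.
    have -> : [set v in g1 x | match v with inl a => p1 a | inr b => p2 b end == i]
       = g1 [set v in x | p1 v == i].
      apply/setP => -[a|b]; rewrite !inE.
        by rewrite !mem_imset ?inE //; move=> ? ? [].
      apply/andP/idP => [[/imsetP [? ? []]] | /imsetP [? ? []]] //.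
    by rewrite card_imset ?hp1 // => ? ? [].
  have -> : [set v in g2 x | match v with inl a => p1 a | inr b => p2 b end == i]
     = g2 [set v in x | p2 v == i].
    apply/setP => -[a|b]; rewrite !inE.
      apply/andP/idP => [[/imsetP [? ? []]] | /imsetP [? ? []]] //.
    by rewrite !mem_imset ?inE //; move=> ? ? [].
  by rewrite card_imset ?hp2 // => ? ? [].
split.
  move=> j; case: (hM1 j) => [[sj1 dj1] cj1]; case: (hM2 j) => [[sj2 dj2] cj2].
  split; last first.
    rewrite cardsU !card_imset // cj1 cj2.
    suff -> : g1 @: M1 j :&: g2 @: M2 j = set0 by rewrite cards0 subn0.
    apply/setP => e; rewrite !inE; apply/negP => /andP [/imsetP [a aM ->]].
    by case/imsetP => b _ /eqP; apply/negP; apply: K1; apply: sM1 aM.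
  split; first by apply: setUSS; apply: imsetS.
  move=> e f; case/setUP => /imsetP [a aM ->]; case/setUP => /imsetP [b bM ->] neq.
  - apply: disj_intro => x /imsetP [y ya ->] /imsetP [z zb [yz]]; subst z.
    have nab : a != b by apply: contra neq => /eqP ->.
    by have := disjointFr (dj1 _ _ aM bM nab) ya; rewrite zb.
  - by apply: disj_intro => x /imsetP [y ya ->] /imsetP [z zb].
  - by apply: disj_intro => x /imsetP [y ya ->] /imsetP [z zb].
  - apply: disj_intro => x /imsetP [y ya ->] /imsetP [z zb [yz]]; subst z.
    have nab : a != b by apply: contra neq => /eqP ->.
    by have := disjointFr (dj2 _ _ aM bM nab) ya; rewrite zb.
move=> [R [cR rR]].
have H1 : forall j (e : {set V1}), g1 e \in g1 @: M1 j :|: g2 @: M2 j -> e \in M1 j.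
  move=> j e; case/setUP => /imsetP [x xM].
    by move/g1i ->.
  by move/eqP; apply/contraTT => _; apply: K2; apply: sM2 xM.
have H2 : forall j (e : {set V2}), g2 e \in g1 @: M1 j :|: g2 @: M2 j -> e \in M2 j.
  move=> j e; case/setUP => /imsetP [x xM].
    by move/eqP; rewrite eq_sym; apply/contraTT => _; apply: K1; apply: sM1 xM.
  by move/g2i ->.
have c1 := no_larger nR1 (pullback (fun x y => @inl_inj V1 V2 x y) H1 rR).
have c2 := no_larger nR2 (pullback (fun x y => @inr_inj V1 V2 x y) H2 rR).
set R1 := [set e : {set V1} | _ \in R] in c1.
set R2 := [set e : {set V2} | _ \in R] in c2.
have : R \subset g1 @: R1 :|: g2 @: R2.
  apply/subsetP => e eR.
  case: rR => sR _; have /bigcupP [j _] := subsetP sR _ eR.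
  case/setUP => /imsetP [x _ ex]; subst e; apply/setUP.
    by left; apply: imset_f; rewrite inE.
  by right; apply: imset_f; rewrite inE.
move/subset_leq_card; rewrite cR => h.
have := leq_trans h (leq_card_setU _ _).
rewrite !card_imset //; move: c1 c2.
set k1 := #|R1|; set k2 := #|R2|; move=> c1 c2 c.
clear -c c1 c2 s10 s20; lia.
Qed.

Lemma main_aux r n q (t : 'I_q.+1 -> nat) : 0 < r -> (forall i, 0 < t i) ->
  (forall i, bad_collection r n (t i) (t i)) ->
  bad_collection r n (\sum_(i < q.+1) t i) ((\sum_(i < q.+1) t i) - q.+1 + 1).
Proof.
move=> r0; elim: q t => [|q IH] t tp tb.
  by rewrite big_ord1 subn1 addn1 prednK ?tp.
rewrite big_ord_recr /=.
set t' := fun i : 'I_q.+1 => t (widen_ord (leqnSn q.+1) i).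
have hS : q.+1 <= \sum_(i < q.+1) t' i.
  have : \sum_(i < q.+1) 1 <= \sum_(i < q.+1) t' i by apply: leq_sum => i _; apply: tp.
  by rewrite sum_nat_const card_ord muln1.
have := combine r0 _ (tp ord_max) (IH t' (fun i => tp _) (fun i => tb _)) (tb ord_max).
rewrite addn1 ltnS leq0n => /(_ isT).
have tm := tp ord_max.
move: hS tm; set S := \sum_(i < q.+1) t' i; set u := t ord_max => hS tm.
have -> : S + u - q.+2 + 1 = (S - q.+1).+1 + u - 1 by lia.
by [].
Qed.

Theorem lemma2p4 (r n q : nat) (t : 'I_q -> nat) :
  0 < r -> 0 < n -> 0 < q -> (forall i, 0 < t i) ->
  (forall i : 'I_q, bad_collection r n (t i) (t i)) ->
  bad_collection r n (\sum_(i < q) t i) ((\sum_(i < q) t i) - q + 1).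
Proof.
move=> r0 _; case: q t => [|q] t // _.
exact: main_aux.
Qed.
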